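(* If a homomorphism distinguishing closed class $\mathcal{F}$ of simple graphs is closed under deleting edges, then it is closed under taking subgraphs.
   Context: All graphs are finite, undirected, without multiple edges; simple means without loops. $\hom(F,G)$ is the number of homomorphisms $F\to G$; $G\equiv_{\mathcal{F}}H$ means $\hom(F,G)=\hom(F,H)$ for all $F\in\mathcal{F}$; $\mathrm{cl}(\mathcal{F})$ is the class of all simple graphs $K$ such that for all simple $G,H$, $G\equiv_{\mathcal{F}}H$ implies $\hom(K,G)=\hom(K,H)$; $\mathcal{F}$ is homomorphism distinguishing closed if $\mathrm{cl}(\mathcal{F})=\mathcal{F}$. Deleting edges yields a graph with the same vertex set and a subset of the edges; subgraphs may also delete vertices. *)

(* Defs.v *)
From mathcomp Require Import all_boot.
Set Implicit Arguments. Unset Strict Implicit. Unset Printing Implicit Defensive.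

Record sgraph := SGraph {
  V : finType;
  adj : rel V;
  adj_sym : symmetric adj;
  adj_irr : irreflexive adj }.

Definition hom (F G : sgraph) : nat :=
  #|[set f : {ffun V F -> V G} | [forall x, forall y, adj x y ==> adj (f x) (f y)]]|.

Definition gclass := sgraph -> Prop.

Definition hom_equiv (F : gclass) (G H : sgraph) : Prop :=
  forall K, F K -> hom K G = hom K H.

Definition cl (F : gclass) : gclass :=
  fun K => forall G H : sgraph, hom_equiv F G H -> hom K G = hom K H.

Definition hd_closed (F : gclass) : Prop := forall K, cl F K <-> F K.

(* Deleting edges: keep the same vertices, keep exactly the edges xy of G
   with E x y and E y x; every subset of the edge set arises this way. *)
Definition del_adj (G : sgraph) (E : rel (V G)) : rel (V G) :=
  fun x y => [&& E x y, E y x & adj x y].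

Lemma del_adj_sym G E : symmetric (@del_adj G E).
Proof. by move=> x y; rewrite /del_adj andbCA (@adj_sym G). Qed.

Lemma del_adj_irr G E : irreflexive (@del_adj G E).
Proof. by move=> x; rewrite /del_adj (@adj_irr G) !andbF. Qed.

Definition delete_edges (G : sgraph) (E : rel (V G)) : sgraph :=
  SGraph (@del_adj_sym G E) (@del_adj_irr G E).

Definition sub_adj (G : sgraph) (S : {set V G}) (E : rel (V G))
  : rel {x : V G | x \in S} :=
  fun u v => del_adj E (val u) (val v).

Lemma sub_adj_sym G S E : symmetric (@sub_adj G S E).
Proof. by move=> u v; rewrite /sub_adj del_adj_sym. Qed.

Lemma sub_adj_irr G S E : irreflexive (@sub_adj G S E).
Proof. by move=> u; rewrite /sub_adj del_adj_irr. Qed.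

Definition subgraph (G : sgraph) (S : {set V G}) (E : rel (V G)) : sgraph :=
  SGraph (@sub_adj_sym G S E) (@sub_adj_irr G S E).

Definition closed_under_edge_deletion (F : gclass) : Prop :=
  forall G E, F G -> F (@delete_edges G E).

Definition closed_under_subgraphs (F : gclass) : Prop :=
  forall G S E, F G -> F (@subgraph G S E).

(* Main.v *)
Require Import Defs.
From mathcomp Require Import all_boot.
Set Implicit Arguments. Unset Strict Implicit.

Definition Ekeep (G : sgraph) (S : {set V G}) (E : rel (V G)) : rel (V G) :=
  fun x y => [&& x \in S, y \in S & E x y].

Lemma decomp (G : sgraph) (S : {set V G}) (E : rel (V G)) (X : sgraph) :
  hom (delete_edges (Ekeep S E)) X =
  hom (subgraph S E) X * #|V X| ^ #|~: S|.
Proof.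
pose VH := {x : V G | x \in S}.
pose VC := {x : V G | x \notin S}.
pose Phi := fun f : {ffun V G -> V X} =>
  (([ffun u : VH => f (val u)] : {ffun VH -> V X}),
   ([ffun u : VC => f (val u)] : {ffun VC -> V X})).
have Phi_inj : injective Phi.
  move=> f g [h1 h2]; apply/ffunP => x; case: (boolP (x \in S)) => hx.
    by have := congr1 (fun h : {ffun VH -> V X} => h (exist _ x hx)) h1; rewrite !ffunE.
  by have := congr1 (fun h : {ffun VC -> V X} => h (exist _ x hx)) h2; rewrite !ffunE.
have Phi_onto : forall p, p \in codom Phi.
  apply: inj_card_onto => //.
  rewrite card_prod !card_ffun -expnD !card_sig.
  have -> : #|[pred x | x \in S]| = #|S| by apply: eq_card.
  have -> : #|[pred x : V G | x \notin S]| = #|~: S|.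
    by apply: eq_card => x; rewrite !inE.
  by rewrite cardsC.
rewrite /hom -(card_imset _ Phi_inj).
rewrite -[#|V X| ^ _](_ : #|[set: {ffun VC -> V X}]| = _); last first.
  rewrite cardsT card_ffun card_sig; congr (_ ^ _); apply: eq_card => x.
  by rewrite !inE.
rewrite -cardsX; apply: eq_card => -[g k].
rewrite in_setX in_setT andbT; apply/imsetP/idP.
  case=> f; rewrite inE => /forallP hf [-> _]; rewrite inE.
  apply/forallP => u; apply/forallP => v; apply/implyP => huv.
  rewrite !ffunE.
  have := forallP (hf (val u)) (val v); rewrite /= /del_adj /Ekeep.
  move: huv; rewrite /= /sub_adj /del_adj => /and3P [-> -> ->].
  by rewrite (valP u) (valP v) /=.
move=> hg; have /codomP [f hf] := Phi_onto (g, k).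
exists f => //; rewrite inE; apply/forallP => x; apply/forallP => y.
apply/implyP; rewrite /= /del_adj /Ekeep.
case/and3P => /and3P [hx hy hexy] /and3P [_ _ heyx] hadj.
move: hg; rewrite inE => /forallP hg.
have := forallP (hg (exist _ x hx)) (exist _ y hy).
rewrite /= /sub_adj /del_adj /= hexy heyx hadj /=.
by case: hf => -> _; rewrite !ffunE.
Qed.

Lemma hom_edgeless (G X : sgraph) :
  hom (delete_edges (fun _ _ : V G => false)) X = #|V X| ^ #|V G|.
Proof.
rewrite /hom -card_ffun -cardsT; apply: eq_card => f; rewrite !inE.
by apply/forallP => x; apply/forallP => y.
Qed.

Lemma hom_le (H X : sgraph) : hom H X <= #|V X| ^ #|V H|.
Proof. by rewrite /hom -card_ffun max_card. Qed.

Lemma hom_empty (H X : sgraph) : #|V H| = 0 -> hom H X = 1.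
Proof.
move=> h0; rewrite /hom -(expn0 #|V X|) -h0 -card_ffun -cardsT.
apply: eq_card => f; rewrite !inE; apply/forallP => x.
by move: (card0_eq h0 x); rewrite !inE.
Qed.

Theorem lemma12 (F : gclass) :
  hd_closed F -> closed_under_edge_deletion F -> closed_under_subgraphs F.
Proof.
move=> hd hdel G S E FG; apply/hd => G1 G2 heq.
have FG' := hdel _ (Ekeep S E) FG.
have Fe := hdel _ (fun _ _ => false) FG.
have h1 := heq _ FG'; rewrite !decomp in h1.
have h2 := heq _ Fe; rewrite !hom_edgeless in h2.
have cardS : #|S| + #|~: S| = #|V G| by rewrite cardsC.
case: (posnP #|~: S|) => hm.
  by move: h1; rewrite hm !expn0 !muln1.
have hn : 0 < #|V G| by rewrite -cardS (leq_trans hm) // leq_addl.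
have /eqP hk : #|V G1| == #|V G2| by rewrite -(eqn_exp2r _ _ hn) h2.
case: (posnP #|V G1|) => hk0.
  case: (posnP #|V (subgraph S E)|) => hs; first by rewrite !hom_empty.
  have := hom_le (subgraph S E) G1; rewrite hk0 exp0n // leqn0 => /eqP->.
  by have := hom_le (subgraph S E) G2; rewrite -hk hk0 exp0n // leqn0 => /eqP->.
apply/eqP; rewrite -(@eqn_pmul2r (#|V G2| ^ #|~: S|)); last by rewrite expn_gt0 -hk hk0.
by rewrite -{1}hk h1.
Qed.
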